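(* Let $n$ be a positive integer and let $\lambda$ be a partition with at most $n$ nonzero parts. Then the number $|\mathrm{SVT}(\lambda,n)|$ of set-valued tableaux of shape $\lambda$ with entries in $[n]$ is odd.
   Context: A partition $\lambda$ is identified with its Young diagram $\{(i,j)\in\mathbb{Z}_{>0}^2 : j\le\lambda_i\}$ (row index $i$ increasing downward). A set-valued tableau of shape $\lambda$ with entries in $[n]=\{1,\dots,n\}$ assigns a non-empty subset $T_{i,j}\subseteq[n]$ to each box $(i,j)\in\lambda$ such that $\max T_{i,j}\le\min T_{i,j+1}$ whenever $(i,j),(i,j+1)\in\lambda$ and $\max T_{i,j}<\min T_{i+1,j}$ whenever $(i,j),(i+1,j)\in\lambda$; $\mathrm{SVT}(\lambda,n)$ is the set of these. *)

(* Defs.v *)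
From mathcomp Require Import all_boot.
Set Implicit Arguments. Unset Strict Implicit. Unset Printing Implicit Defensive.

Definition is_partition (la : seq nat) : bool :=
  sorted geq la && all (fun k => 0 < k) la.

(* Boxes are 0-indexed: (i,j) in la  iff  i < size la and j < la_i. *)
Definition in_shape (la : seq nat) (i j : nat) : bool :=
  (i < size la) && (j < nth 0 la i).

(* Entries in [n] = {1..n} are represented by 'I_n = {0..n-1}
   (order-preserving relabelling k |-> k-1).
   A filling assigns a subset of 'I_n to each cell of the bounding
   rectangle 'I_(size la) x 'I_(head 0 la); cells outside the shape get
   the empty set (so fillings of the shape correspond bijectively to
   these canonical finite functions). *)
Definition filling (la : seq nat) (n : nat) : finType :=
  {ffun 'I_(size la) * 'I_(head 0 la) -> {set 'I_n}}.

Definition maxS n (A : {set 'I_n}) : nat := \max_(x in A) (x : nat).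
Definition minS n (A : {set 'I_n}) : nat := \big[minn/n]_(x in A) (x : nat).

Definition is_svt (la : seq nat) (n : nat) (T : filling la n) : bool :=
  [forall c : 'I_(size la) * 'I_(head 0 la),
     let i := (c.1 : nat) in let j := (c.2 : nat) in
     if in_shape la i j then
       [&& T c != set0,
           [forall c' : 'I_(size la) * 'I_(head 0 la),
              ((c'.1 : nat) == i) && ((c'.2 : nat) == j.+1)
                && in_shape la c'.1 c'.2 ==> (maxS (T c) <= minS (T c'))]
         &
           [forall c' : 'I_(size la) * 'I_(head 0 la),
              ((c'.1 : nat) == i.+1) && ((c'.2 : nat) == j)
                && in_shape la c'.1 c'.2 ==> (maxS (T c) < minS (T c'))]]
     else T c == set0].

Definition SVT (la : seq nat) (n : nat) : {set filling la n} :=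
  [set T | is_svt T].

(* Main.v *)
Require Import Defs.
From mathcomp Require Import all_boot zify.
Set Implicit Arguments. Unset Strict Implicit. Unset Printing Implicit Defensive.

Module H1.

Lemma minS_le n (A : {set 'I_n}) (x : 'I_n) : x \in A -> minS A <= x.
Proof.
move=> xA; rewrite /minS.
have: x \in index_enum 'I_n by rewrite mem_index_enum.
elim: (index_enum _) => [//|y r IH]; rewrite inE big_cons.
case/orP => [/eqP <-|xr]; first by rewrite xA geq_minl.
by case: ifP => _; [apply: leq_trans (geq_minr _ _) (IH xr) | exact: IH].
Qed.

Lemma minS_geP n (A : {set 'I_n}) m : m <= n ->
  (m <= minS A) <-> (forall x : 'I_n, x \in A -> m <= x).
Proof.
move=> mn; split => [H x xA|H]; first exact: leq_trans H (minS_le xA).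
rewrite /minS; elim/big_ind: _ => //.
by move=> a b ha hb; rewrite leq_min ha hb.
Qed.

Lemma rowP n (A B : {set 'I_n}) :
  (maxS A <= minS B) <-> (forall x y : 'I_n, x \in A -> y \in B -> x <= y).
Proof.
split => [H x y xA yB|H].
  apply: leq_trans (minS_le yB); apply: leq_trans H.
  exact: (leq_bigmax_cond (F := fun x : 'I_n => (x : nat)) x xA).
apply/bigmax_leqP => x xA; apply/minS_geP; first exact: ltnW.
by move=> y yB; apply: H.
Qed.

Lemma colP n (A B : {set 'I_n}) : A != set0 ->
  (maxS A < minS B) <-> (forall x y : 'I_n, x \in A -> y \in B -> x < y).
Proof.
move=> A0; split => [H x y xA yB|H].
  apply: leq_trans (minS_le yB); apply: leq_ltn_trans H.
  exact: (leq_bigmax_cond (F := fun x : 'I_n => (x : nat)) x xA).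
rewrite -card_gt0 in A0.
case: (eq_bigmax_cond (fun x : 'I_n => (x : nat)) A0) => a aA.
rewrite /maxS => ->; apply/minS_geP => // y yB; exact: H.
Qed.

End H1.
Import H1.

Module H2.

Section Parity.
Variables (T : finType) (g : T -> T).

Lemma inv_even k (A : {set T}) : #|A| <= k ->
  (forall x, x \in A -> [/\ g x \in A, g x != x & g (g x) = x]) -> ~~ odd #|A|.
Proof.
elim: k A => [|k IH] A.
  by rewrite leqn0 => /eqP ->.
move=> hk H.
case: (set_0Vmem A) => [->|[x xA]]; first by rewrite cards0.
have [gxA gxx ggx] := H x xA.
set A' := A :\ x :\ g x.
have gxA' : g x \in A :\ x by rewrite !inE gxx.
have eA : #|A| = (#|A'|).+2.
  by rewrite (cardsD1 x A) xA (cardsD1 (g x) (A :\ x)) gxA'.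
rewrite eA /= !negbK; apply: (IH A').
  by move: hk; rewrite eA; lia.
move=> y; rewrite !inE => /and3P[ygx yx yA].
have [gyA gyy ggy] := H y yA.
split; [|exact: gyy|exact: ggy].
rewrite gyA andbT; apply/andP; split.
  by apply: contra yx => /eqP e; rewrite -ggy e ggx.
by apply: contra ygx => /eqP e; rewrite -e ggy.
Qed.

Lemma inv_parity (A : {set T}) : (forall x, x \in A -> g x \in A) ->
  (forall x, x \in A -> g (g x) = x) ->
  odd #|A| = odd #|[set x in A | g x == x]|.
Proof.
move=> HA Hg.
rewrite -(cardsID [set x | g x == x] A).
have -> : A :&: [set x | g x == x] = [set x in A | g x == x].
  by apply/setP => x; rewrite !inE.
rewrite oddD (negbTE (@inv_even #|A :\: [set x | g x == x]| _ (leqnn _) _)) ?addbF //.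
move=> x; rewrite !inE => /andP[gx xA]; split.
- by rewrite HA // andbT Hg // eq_sym.
- exact: gx.
- exact: Hg.
Qed.
End Parity.

End H2.
Import H2.

Module H3.

Section Main.
Variables (la : seq nat) (n : nat).
Local Notation C := ('I_(size la) * 'I_(head 0 la))%type.
Definition ins (c : C) := in_shape la c.1 c.2.

Definition svt_spec (T : filling la n) :=
 [/\ forall c, ~~ ins c -> T c = set0,
     forall c, ins c -> T c != set0,
     forall c c' : C, ins c -> ins c' -> c'.1 = c.1 :> nat -> c'.2 = (c.2).+1 :> nat ->
        forall x y, x \in T c -> y \in T c' -> x <= y
   & forall c c' : C, ins c -> ins c' -> c'.1 = (c.1).+1 :> nat -> c'.2 = c.2 :> nat ->
        forall x y, x \in T c -> y \in T c' -> x < y].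

Lemma svtP T : is_svt T <-> svt_spec T.
Proof.
split.
  move/forallP => H; split.
  - by move=> c ci; have := H c; rewrite /= -/(ins c) (negbTE ci) => /eqP.
  - by move=> c ci; have := H c; rewrite /= -/(ins c) ci => /and3P[].
  - move=> c c' ci ci' e1 e2 x y xT yT.
    have := H c; rewrite /= -/(ins c) ci => /and3P[_ /forallP /(_ c') Hr _].
    move: Hr; rewrite -/(ins c') ci' e1 e2 !eqxx /= => /rowP; apply => //.
  - move=> c c' ci ci' e1 e2 x y xT yT.
    have := H c; rewrite /= -/(ins c) ci => /and3P[T0 _ /forallP /(_ c') Hr].
    move: Hr; rewrite -/(ins c') ci' e1 e2 !eqxx /= => /(colP _ T0); apply => //.
case=> H0 H1 Hr Hc; apply/forallP => c /=; rewrite -/(ins c).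
case: ifP => ci; last by rewrite H0 ?ci.
apply/and3P; split; first exact: H1.
  apply/forallP => c'; apply/implyP => /andP[/andP[/eqP e1 /eqP e2] ci'].
  by apply/rowP => x y; apply: Hr.
apply/forallP => c'; apply/implyP => /andP[/andP[/eqP e1 /eqP e2] ci'].
by apply/(colP _ (H1 c ci)) => x y; apply: Hc.
Qed.
End Main.

End H3.
Import H3.

Module H4.

Section Inv.
Variables (la : seq nat) (n : nat).
Hypothesis Hla : is_partition la.
Local Notation C := ('I_(size la) * 'I_(head 0 la))%type.
Local Notation ins := (@ins la).

Lemma F1 (T : filling la n) : svt_spec T ->
  forall c, ins c -> forall x, x \in T c -> c.1 <= x.
Proof.
case=> H0 H1 Hr Hc.
suff: forall k (c : C), c.1 = k :> nat -> ins c -> forall x, x \in T c -> k <= x.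
  by move=> S c ci x xT; apply: (S c.1 c).
elim=> [c _ _ x _ //|k IH] c ek ci x xT.
have hk : k < size la by move: (ltn_ord c.1); rewrite ek; lia.
pose a : C := (Ordinal hk, c.2).
have ai : ins a.
  rewrite /ins /in_shape /= hk /=.
  move: ci; rewrite /ins /in_shape ek => /andP[_ h]; apply: leq_trans h _.
  case/andP: Hla => /sortedP S _.
  by apply: (S 0 k); rewrite -ek.
case: (set_0Vmem (T a)) => [e|[y ya]]; first by move: (H1 a ai); rewrite e eqxx.
have := IH a erefl ai y ya => ky.
have := Hc a c ai ci ek erefl y x ya xT.
lia.
Qed.

Definition Si i : {set 'I_n} := [set y : 'I_n | val y == i].
Definition tog (A : {set 'I_n}) i : {set 'I_n} :=
  [set y : 'I_n | if val y == i then y \notin A else y \in A].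
Definition bad (T : filling la n) c := ins c && (T c != Si c.1).
Definition lex (c b : C) :=
  (c.1 < b.1) || ((c.1 == b.1 :> nat) && (c.2 < b.2)).
Definition minbad T b := bad T b && [forall c, bad T c ==> ~~ lex c b].
Definition upd (T : filling la n) (b : C) : filling la n :=
  [ffun c => if c == b then tog (T c) b.1 else T c].
Definition g T := if [pick b | minbad T b] is Some b then upd T b else T.

Lemma minbad_uniq T b b' : minbad T b -> minbad T b' -> b = b'.
Proof.
case/andP=> bb /forallP mb; case/andP=> bb' /forallP mb'.
have := mb b'; have := mb' b; rewrite bb bb' /= /lex.
clear bb mb mb' bb'.
case: b => [[i hi] [j hj]]; case: b' => [[i' hi'] [j' hj']] /=.
move=> h1 h2.
have ei : i = i' by lia.
subst i'; have ej : j = j' by lia.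
by subst j'; congr (_, _); apply: val_inj.
Qed.

Lemma togK A i : tog (tog A i) i = A.
Proof. by apply/setP => y; rewrite !inE; case: (val y == i); rewrite ?negbK. Qed.

Lemma in_tog A i y : y \in tog A i -> val y = i \/ y \in A.
Proof. by rewrite inE; case: eqP => [->|_]; [left|right]. Qed.

Lemma minbad_lt T b c : minbad T b -> ins c -> lex c b -> T c = Si c.1.
Proof.
case/andP=> _ /forallP /(_ c); rewrite /bad => h ci l.
by apply/eqP; move: h; rewrite ci l /= implybF negbK.
Qed.

Lemma upd_spec T b : svt_spec T -> minbad T b -> svt_spec (upd T b).
Proof.
move=> sT mb; have F := F1 sT; case: sT => H0 H1 Hr Hc.
have /andP[bi bSi] := (andP mb).1.
have Mb := minbad_lt mb.
split.
- move=> c ci; rewrite ffunE; case: (c =P b) => [e|_]; last exact: H0.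
  by move: ci; rewrite e bi.
- move=> c ci; rewrite ffunE; case: (c =P b) => [->|_]; last exact: H1.
  case: (set_0Vmem (T b)) => [e|[y yb]]; first by move: (H1 b bi); rewrite e eqxx.
  case: (boolP (val y == b.1)) => [/eqP yi|yi]; last first.
    by apply/set0Pn; exists y; rewrite inE (negbTE yi).
  have [z] : exists z, (z \in T b) != (z \in Si b.1).
    apply/existsP; apply: contraR bSi => /existsPn h.
    by apply/eqP/setP => z; move: (h z); rewrite negbK => /eqP.
  rewrite [z \in Si _]inE; case: (boolP (val z == b.1)) => [/eqP zi|zi].
    have ezy : z = y by apply: val_inj; rewrite zi yi.
    by rewrite ezy yb.
  move=> /= zb; apply/set0Pn; exists z; rewrite inE (negbTE zi).
  by move: zb; case: (z \in T b).
- move=> c c' ci ci' e1 e2 x y; rewrite !ffunE.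
  case: (c =P b) => [ecb|ncb]; case: (c' =P b) => [ecb'|ncb'].
  + by exfalso; move: e2; rewrite ecb ecb'; lia.
  + subst c => /in_tog [xi|xb] yc'; last exact: Hr xb yc'.
    by rewrite xi -e1; apply: F.
  + subst c' => xc /in_tog yb.
    have : lex c b by rewrite /lex e1 eqxx e2 ltnSn orbT.
    move/(Mb c ci); move=> Tc; move: xc; rewrite Tc inE => /eqP ->.
    by case: yb => [->|yb]; rewrite -?e1 //; apply: (F b bi).
  + exact: Hr.
- move=> c c' ci ci' e1 e2 x y; rewrite !ffunE.
  case: (c =P b) => [ecb|ncb]; case: (c' =P b) => [ecb'|ncb'].
  + by exfalso; move: e1; rewrite ecb ecb'; lia.
  + subst c => /in_tog [xi|xb] yc'; last exact: Hc xb yc'.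
    by rewrite xi -ltnS -e1; apply: F.
  + subst c' => xc /in_tog yb.
    have : lex c b by rewrite /lex e1 ltnSn.
    move/(Mb c ci); move=> Tc; move: xc; rewrite Tc inE => /eqP ->.
    by case: yb => [->|yb]; rewrite -?e1 //; apply: (F b bi).
  + exact: Hc.
Qed.
End Inv.

End H4.
Import H4.

Module H5.

Section Fin.
Variables (la : seq nat) (n : nat).
Hypothesis Hla : is_partition la.
Hypothesis Hn : size la <= n.
Local Notation C := ('I_(size la) * 'I_(head 0 la))%type.
Local Notation ins := (@ins la).
Local Notation g := (@g la n).
Local Notation minbad := (@minbad la n).
Local Notation upd := (@upd la n).

Lemma tog_Si i : tog (Si n i) i = set0.
Proof. by apply/setP => y; rewrite !inE; case: (val y == i). Qed.

Lemma g_upd T b : minbad T b -> g T = upd T b.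
Proof.
move=> mb; rewrite /H4.g; case: pickP => [b' mb'|h].
  by rewrite (minbad_uniq Hla mb' mb).
by have := h b; rewrite mb.
Qed.

Lemma g_id T : (forall b, minbad T b = false) -> g T = T.
Proof. by move=> none; rewrite /H4.g; case: pickP => [b mb|//]; rewrite none in mb. Qed.

Lemma g_spec T : svt_spec T -> svt_spec (g T).
Proof.
move=> sT; case: (pickP (minbad T)) => [b mb|none].
  by rewrite (g_upd mb); exact: (upd_spec Hla sT mb).
by rewrite g_id.
Qed.

Lemma g_inv T : svt_spec T -> g (g T) = T.
Proof.
move=> sT; case: (pickP (minbad T)) => [b mb|none]; last by rewrite !g_id.
have H1 : forall c, ins c -> T c != set0 by case: sT.
rewrite (g_upd mb).
have mb2 : minbad (upd T b) b.
  case/andP: mb => /andP[bi bS] /forallP mb.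
  apply/andP; split.
    rewrite /bad bi /= ffunE eqxx; apply: contraNneq (H1 b bi) => e.
    by rewrite -(togK (T b) b.1) e tog_Si.
  apply/forallP => c; case: (c =P b) => [->|ncb].
    by rewrite /lex ltnn eqxx ltnn implybT.
  by rewrite /bad ffunE; case: (c =P b) => // _; apply: mb.
rewrite (g_upd mb2); apply/ffunP => c; rewrite !ffunE.
by case: (c =P b) => [->|//]; rewrite togK.
Qed.

Definition T0 : filling la n := [ffun c => if ins c then Si n c.1 else set0].

Lemma T0_spec : svt_spec T0.
Proof.
split.
- by move=> c ci; rewrite ffunE (negbTE ci).
- move=> c ci; rewrite ffunE ci; apply/set0Pn.
  by exists (Ordinal (leq_trans (ltn_ord c.1) Hn)); rewrite inE.
- move=> c c' ci ci' e1 e2 x y; rewrite !ffunE ci ci' !inE => /eqP -> /eqP ->.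
  by rewrite e1.
- move=> c c' ci ci' e1 e2 x y; rewrite !ffunE ci ci' !inE => /eqP -> /eqP ->.
  by rewrite e1.
Qed.

Definition key (c : C) := c.1 * head 0 la + c.2.

Lemma g_fix T : svt_spec T -> (g T == T) = (T == T0).
Proof.
move=> sT; have H0 : forall c, ~~ ins c -> T c = set0 by case: sT.
case: (pickP (minbad T)) => [b mb|none].
  rewrite (g_upd mb).
  have /andP[/andP[bi bS] _] := mb.
  have bn : b.1 < n := leq_trans (ltn_ord b.1) Hn.
  have -> : (upd T b == T) = false.
    apply/negbTE/eqP => /ffunP /(_ b); rewrite ffunE eqxx => /setP /(_ (Ordinal bn)).
    by rewrite inE /= eqxx; case: (_ \in _).
  apply/esym/negbTE; apply: contra bS => /eqP ->; by rewrite ffunE bi.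
rewrite g_id // eqxx; apply/esym/eqP.
have nobad : forall c, bad T c = false.
  move=> c; apply/negbTE/negP => cb.
  case: (arg_minnP key cb) => c' c'b Hmin.
  have := none c'; rewrite /H4.minbad c'b /=.
  move/negbT/negP; apply; apply/forallP => d; apply/implyP => db.
  have := Hmin d db; rewrite /key /lex.
  case: d {db} => [[d1 hd1] [d2 hd2]]; case: c' {c'b Hmin} => [[e1 he1] [e2 he2]] /=.
  move=> h; apply/negP => /orP [l|/andP[/eqP ee l]]; last by subst; lia.
  by nia.
apply/ffunP => c; rewrite ffunE; case ci: (ins c); last by rewrite H0 ?ci.
by have := nobad c; rewrite /bad ci /= => /negbFE/eqP.
Qed.
End Fin.


End H5.
Import H5.
Theorem corollaryA2 (n : nat) (la : seq nat) :
  0 < n -> is_partition la -> size la <= n ->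
  odd #|SVT la n|.
Proof.
move=> _ Hla Hn.
rewrite (inv_parity (g := @H4.g la n)).
- have -> : [set x in SVT la n | H4.g x == x] = [set T0 la n].
    apply/setP => T; rewrite !inE; case: (boolP (is_svt T)) => h /=.
      by rewrite g_fix //; apply/svtP.
    apply/esym/negbTE; apply: contraNneq h => ->; apply/svtP; exact: T0_spec.
  by rewrite cards1.
- move=> T; rewrite !inE => /svtP sT; apply/svtP; exact: g_spec.
- by move=> T; rewrite !inE => /svtP sT; apply: g_inv.
Qed.
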